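(* Let $d\ge1$ and let $T$ be a $d\times d$ column-stochastic matrix. For each row $i$ choose a permutation $\sigma_i$ of $\{1,\dots,d\}$ such that $T_{i\sigma_i(1)}\ge T_{i\sigma_i(2)}\ge\dots\ge T_{i\sigma_i(d)}$, and for $n=1,\dots,d$ define $K_n=\sum_{i=1}^d\sqrt{T_{i\sigma_i(n)}}\,|i\rangle\langle\sigma_i(n)|$. Then $\Phi(\rho)=\sum_{n=1}^dK_n\rho K_n^\dagger$ is a quantum channel whose classical action is $T$, and the nonzero part of the spectrum of its Jamio{\l}kowski state is given by $$\boldsymbol{\lambda}(J_\Phi)=\frac1d\sum_{i=1}^d\mathbf{r}^{(i)},\qquad \mathbf{r}^{(i)}=(T_{i1},\dots,T_{id})^\downarrow,$$ (padded with zeros to length $d^2$). In particular, every $T$ is the classical action of a channel whose Jamio{\l}kowski state has rank at most $d$ (i.e., with at most $d$ Kraus operators).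
   Context: Fix an orthonormal basis $\{|i\rangle\}_{i=1}^d$ of $\mathbb{C}^d$, $|\Omega\rangle=\sum_i|ii\rangle$. The Jamio{\l}kowski state of a channel $\Phi$ is $J_\Phi=\frac1d(\Phi\otimes\mathcal{I})(|\Omega\rangle\langle\Omega|)$. The classical action of $\Phi$ is the matrix $T$ with $T_{ij}=\langle i|\Phi(|j\rangle\langle j|)|i\rangle$. A column-stochastic matrix satisfies $T_{ij}\ge0$ and $\sum_iT_{ij}=1$ for all $j$. $\boldsymbol{\lambda}(X)$ denotes eigenvalues in non-increasing order and $x^\downarrow$ the non-increasing rearrangement of a vector $x$. *)

(* Defs.v *)
From HB Require Import structures.
From mathcomp Require Import all_boot all_order all_fingroup all_algebra.
From mathcomp Require Import complex mxtens.
Set Implicit Arguments. Unset Strict Implicit. Unset Printing Implicit Defensive.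
Import Order.TTheory GRing.Theory Num.Theory.
Local Open Scope ring_scope.
Local Open Scope complex_scope.

Section Defs.
Variable R : rcfType.
Local Notation C := R[i].

Definition adjmx m n (A : 'M[C]_(m, n)) : 'M[C]_(n, m) := (map_mx Num.conj A)^T.

Definition psd n (A : 'M[C]_n) : Prop :=
  adjmx A = A /\ forall v : 'cV[C]_n, 0 <= (adjmx v *m A *m v) 0 0.

(* (Phi \otimes id_m)(X), for X on C^d \otimes C^m, with basis |j>|a> indexed by
   mxtens_index (j, a) (the convention of tensmx) *)
Definition ext_id d m (Phi : 'M[C]_d -> 'M[C]_d) (X : 'M[C]_(d * m)) : 'M[C]_(d * m) :=
  \sum_(j < d) \sum_(k < d) \sum_(a < m) \sum_(b < m)
     X (mxtens_index (j, a)) (mxtens_index (k, b)) *: (Phi (delta_mx j k) *t delta_mx a b).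

Definition quantum_channel d (Phi : 'M[C]_d -> 'M[C]_d) : Prop :=
  [/\ (forall (c : C) X Y, Phi (c *: X + Y) = c *: Phi X + Phi Y),
      (forall m (X : 'M[C]_(d * m)), psd X -> psd (ext_id Phi X)) &
      (forall X, \tr (Phi X) = \tr X)].

(* Jamiolkowski state J = 1/d (Phi \otimes I)(|Omega><Omega|),
   |Omega><Omega| = sum_{j,k} |j><k| \otimes |j><k| *)
Definition jamiolkowski d (Phi : 'M[C]_d -> 'M[C]_d) : 'M[C]_(d * d) :=
  (d%:R)^-1 *: \sum_(j < d) \sum_(k < d) (Phi (delta_mx j k) *t delta_mx j k).

Definition classical_action d (Phi : 'M[C]_d -> 'M[C]_d) : 'M[C]_d :=
  \matrix_(i, j) Phi (delta_mx j j) i i.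

Definition column_stochastic d (T : 'M[R]_d) : Prop :=
  (forall i j, 0 <= T i j) /\ (forall j, \sum_i T i j = 1).

Definition kraus d (T : 'M[R]_d) (sigma : 'I_d -> 'S_d) (n : 'I_d) : 'M[C]_d :=
  \sum_(i < d) (Num.sqrt (T i (sigma i n)))%:C *: delta_mx i (sigma i n).

Definition kraus_channel d (T : 'M[R]_d) (sigma : 'I_d -> 'S_d) (rho : 'M[C]_d) : 'M[C]_d :=
  \sum_(n < d) kraus T sigma n *m rho *m adjmx (kraus T sigma n).

(* r^(i) = non-increasing rearrangement of row i of T (entry n, 0-based) *)
Definition sorted_row d (T : 'M[R]_d) (i : 'I_d) (n : nat) : R :=
  nth 0 (sort >=%R [seq T i j | j <- enum 'I_d]) n.

Definition predicted_spectrum d (T : 'M[R]_d) (k : 'I_(d * d)) : R :=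
  if (k < d)%N then (d%:R)^-1 * \sum_(i < d) sorted_row T i k else 0.

End Defs.

(* Main.v *)
Require Import Defs.
From HB Require Import structures.
From mathcomp Require Import all_boot all_order all_fingroup all_algebra.
From mathcomp Require Import complex mxtens.
Import Order.TTheory GRing.Theory Num.Theory.
Local Open Scope ring_scope.
Local Open Scope complex_scope.
Set Implicit Arguments. Unset Strict Implicit.

Section Aux.
Variable R : rcfType.
Local Notation C := R[i].
Local Notation cj := (@Num.conj C).

Lemma adjmxE m n (A : 'M[C]_(m, n)) i j : adjmx A i j = cj (A j i).
Proof. by rewrite /adjmx !mxE. Qed.

Lemma adjmxK m n (A : 'M[C]_(m, n)) : adjmx (adjmx A) = A.
Proof. by apply/matrixP => i j; rewrite !adjmxE conjCK. Qed.

Lemma adjmxM m n p (A : 'M[C]_(m, n)) (B : 'M[C]_(n, p)) :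
  adjmx (A *m B) = adjmx B *m adjmx A.
Proof. by rewrite /adjmx map_mxM trmx_mul. Qed.

Lemma adjmxD m n (A B : 'M[C]_(m, n)) : adjmx (A + B) = adjmx A + adjmx B.
Proof. by apply/matrixP => i j; rewrite /adjmx !mxE rmorphD. Qed.

Lemma psd0 n : psd (0 : 'M[C]_n).
Proof.
split; first by apply/matrixP => i j; rewrite adjmxE !mxE rmorph0.
by move=> v; rewrite mulmx0 mul0mx mxE.
Qed.

Lemma psdD n (A B : 'M[C]_n) : psd A -> psd B -> psd (A + B).
Proof.
move=> [hA qA] [hB qB]; split; first by rewrite adjmxD hA hB.
by move=> v; rewrite mulmxDr mulmxDl mxE addr_ge0.
Qed.

Lemma psd_sum n (I : finType) (F : I -> 'M[C]_n) :
  (forall i, psd (F i)) -> psd (\sum_i F i).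
Proof.
move=> h; elim/big_ind: _ => //; [exact: psd0 | exact: psdD].
Qed.

Lemma psd_congr n (M X : 'M[C]_n) : psd X -> psd (M *m X *m adjmx M).
Proof.
move=> [hX qX]; split.
  by rewrite !adjmxM adjmxK hX mulmxA.
move=> v; have := qX (adjmx M *m v).
by rewrite adjmxM adjmxK !mulmxA.
Qed.

Lemma sum_tens (V : nmodType) m n (F : 'I_(m * n) -> V) :
  \sum_k F k = \sum_i \sum_j F (mxtens_index (i, j)).
Proof.
rewrite [RHS]pair_big /= (reindex (@mxtens_index m n)) /=.
  by apply: eq_bigr => -[].
by exists (@mxtens_unindex m n) => x _; rewrite ?mxtens_indexK ?mxtens_unindexK.
Qed.

Lemma sum_natl n (c : 'I_n) (F : 'I_n -> C) :
  \sum_a (a == c)%:R * F a = F c.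
Proof.
rewrite (bigD1 c) //= eqxx mul1r big1 ?addr0 // => a /negbTE ->.
by rewrite mul0r.
Qed.

Lemma sum_natr n (c : 'I_n) (F : 'I_n -> C) :
  \sum_a F a * (a == c)%:R = F c.
Proof. by rewrite -(sum_natl c F); apply: eq_bigr => a _; rewrite mulrC. Qed.

Lemma sum_ifl n (c : 'I_n) (x : C) (F : 'I_n -> C) :
  \sum_a (if a == c then x else 0) * F a = x * F c.
Proof.
rewrite (bigD1 c) //= eqxx big1 ?addr0 // => a /negbTE ->.
by rewrite mul0r.
Qed.

Lemma sum_ifr n (c : 'I_n) (x : C) (F : 'I_n -> C) :
  \sum_a F a * (if a == c then x else 0) = F c * x.
Proof. by rewrite mulrC -(sum_ifl c x F); apply: eq_bigr => a _; rewrite mulrC. Qed.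

Lemma conj_realC (x : R) : 0 <= x -> cj x%:C = x%:C.
Proof. by move=> h; apply: conj_Creal; apply: ger0_real; rewrite ler0c. Qed.

Lemma sqrtC_mul (t : R) : 0 <= t ->
  (Num.sqrt t)%:C * cj ((Num.sqrt t)%:C) = t%:C.
Proof.
move=> h; rewrite conj_realC ?sqrtr_ge0 // -rmorphM /=.
by rewrite -expr2 sqr_sqrtr.
Qed.

End Aux.

Section Main.
Variable R : rcfType.
Local Notation C := R[i].
Local Notation cj := (@Num.conj C).
Variables (d : nat) (T : 'M[R]_d) (sigma : 'I_d -> 'S_d).
Hypothesis Tge0 : forall i j, 0 <= T i j.
Hypothesis Tsum : forall j, \sum_i T i j = 1.

Local Notation K := (kraus T sigma).
Local Notation Phi := (kraus_channel T sigma).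
Local Notation s a n := ((Num.sqrt (T a (sigma a n)))%:C).

Lemma kraus_entry n a b :
  K n a b = if b == sigma a n then s a n else 0.
Proof.
rewrite /kraus summxE (bigD1 a) //= big1 ?addr0.
  rewrite !mxE eqxx /=; case: eqP => _; first by rewrite mulr1.
  by rewrite mulr0.
by move=> i /negbTE hi; rewrite !mxE eq_sym hi /= mulr0.
Qed.

Lemma chan_gen A p q :
  Phi A p q = \sum_n \sum_y (\sum_x K n p x * A x y) * cj (K n q y).
Proof.
rewrite /kraus_channel summxE; apply: eq_bigr => n _.
rewrite mxE; apply: eq_bigr => y _; by rewrite !mxE.
Qed.

Lemma chan_delta a b p q :
  Phi (delta_mx a b) p q = \sum_n K n p a * cj (K n q b).
Proof.
rewrite chan_gen; apply: eq_bigr => n _.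
have e : forall y, \sum_x K n p x * delta_mx a b x y = (K n p a) * (y == b)%:R.
  move=> y; under eq_bigr => x _ do rewrite mxE -mulnb natrM mulrA.
  by rewrite -mulr_suml (sum_natr a (K n p)).
under eq_bigr => y _ do rewrite e mulrAC.
by rewrite (sum_natr b (fun y => K n p a * cj (K n q y))).
Qed.

Lemma chan_sigma A p q :
  Phi A p q = \sum_n s p n * A (sigma p n) (sigma q n) * cj (s q n).
Proof.
rewrite chan_gen; apply: eq_bigr => n _.
under eq_bigr => y _ do rewrite (kraus_entry n q y) (fun_if cj) rmorph0.
rewrite sum_ifr; congr (_ * _).
under eq_bigr => x _ do rewrite kraus_entry.
by rewrite sum_ifl.
Qed.

Lemma sum_perm (i : 'I_d) (F : 'I_d -> C) :
  \sum_n F (sigma i n) = \sum_b F b.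
Proof. by rewrite [RHS](reindex_inj (@perm_inj _ (sigma i))). Qed.

Lemma classical_ok : classical_action Phi = map_mx (fun x => x%:C) T.
Proof.
apply/matrixP => i j; rewrite !mxE chan_sigma.
under eq_bigr => n _ do rewrite mxE mulrAC sqrtC_mul //.
rewrite (sum_perm i (fun b => (T i b)%:C * ((b == j) && (b == j))%:R)).
rewrite (bigD1 j) //= big1 ?addr0; first by rewrite eqxx mulr1.
by move=> b /negbTE ->; rewrite mulr0.
Qed.

Lemma trace_ok X : \tr (Phi X) = \tr X.
Proof.
rewrite /mxtrace.
under eq_bigr => p _ do rewrite chan_sigma.
under eq_bigr => p _ do under eq_bigr => n _ do rewrite mulrAC sqrtC_mul //.
under eq_bigr => p _ do rewrite (sum_perm p (fun b => (T p b)%:C * X b b)).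
rewrite exchange_big /=; apply: eq_bigr => b _.
by rewrite -mulr_suml -rmorph_sum /= Tsum mul1r.
Qed.

Lemma linear_ok (c : C) X Y : Phi (c *: X + Y) = c *: Phi X + Phi Y.
Proof.
rewrite /kraus_channel scaler_sumr -big_split /=; apply: eq_bigr => n _.
by rewrite mulmxDr mulmxDl -scalemxAr -scalemxAl.
Qed.

End Main.

Lemma sum_natl2 (R : rcfType) n (c : 'I_n) (F : 'I_n -> R[i]) :
  \sum_a (c == a)%:R * F a = F c.
Proof. by rewrite -(sum_natl c F); apply: eq_bigr => a _; rewrite eq_sym. Qed.

Lemma sum_natr2 (R : rcfType) n (c : 'I_n) (F : 'I_n -> R[i]) :
  \sum_a F a * (c == a)%:R = F c.
Proof. by rewrite -(sum_natr c F); apply: eq_bigr => a _; rewrite eq_sym. Qed.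

Lemma sum_delta2 (R : rcfType) m (al be : 'I_m) (F : 'I_m -> 'I_m -> R[i]) :
  \sum_a \sum_b F a b * ((al == a) && (be == b))%:R = F al be.
Proof.
under eq_bigr => a _ do under eq_bigr => b _ do rewrite -mulnb natrM mulrA.
under eq_bigr => a _ do rewrite (sum_natr2 be (fun b => F a b * (al == a)%:R)).
by rewrite (sum_natr2 al (fun a => F a be)).
Qed.

Section CP.
Variable R : rcfType.
Local Notation C := R[i].
Local Notation cj := (@Num.conj C).
Variables (d : nat) (T : 'M[R]_d) (sigma : 'I_d -> 'S_d).
Local Notation K := (kraus T sigma).
Local Notation Phi := (kraus_channel T sigma).

Lemma ext_id_eq m (X : 'M[C]_(d * m)) :
  ext_id Phi X = \sum_n (K n *t (1%:M : 'M[C]_m)) *m X *m adjmx (K n *t 1%:M).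
Proof.
apply/matrixP => p q.
case: p / (mxtens_indexP p) => i al; case: q / (mxtens_indexP q) => i2 be.
transitivity (\sum_j \sum_k \sum_n
   K n i j * X (mxtens_index (j, al)) (mxtens_index (k, be)) * cj (K n i2 k)).
  rewrite /ext_id summxE; apply: eq_bigr => j _; rewrite summxE; apply: eq_bigr => k _.
  rewrite summxE.
  under eq_bigr => a _ do rewrite summxE.
  under eq_bigr => a _ do under eq_bigr => b _ do
    rewrite mxE tensmxE [delta_mx _ _ _ _]mxE mulrA.
  rewrite (sum_delta2 al be (fun a b => X (mxtens_index (j, a)) (mxtens_index (k, b)) * Phi (delta_mx j k) i i2)).
  rewrite chan_delta mulr_sumr.
  by apply: eq_bigr => n _; rewrite mulrA [X _ _ * _]mulrC.
rewrite summxE.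
transitivity (\sum_n \sum_k \sum_j
   K n i j * X (mxtens_index (j, al)) (mxtens_index (k, be)) * cj (K n i2 k)); last first.
  apply: eq_bigr => n _.
  have hMX : forall s, (K n *t (1%:M : 'M[C]_m) *m X) (mxtens_index (i, al)) s
       = \sum_j K n i j * X (mxtens_index (j, al)) s.
    move=> s; rewrite mxE sum_tens; apply: eq_bigr => j _.
    under eq_bigr => a _ do rewrite tensmxE mxE mulrAC.
    by rewrite (sum_natr2 al (fun a => K n i j * X (mxtens_index (j, a)) s)).
  rewrite mxE sum_tens; apply: eq_bigr => k _.
  symmetry; under eq_bigr => b _ do rewrite adjmxE tensmxE hMX mxE rmorphM rmorph_nat mulrA.
  rewrite (sum_natr2 be (fun b => (\sum_j K n i j * X (mxtens_index (j, al)) (mxtens_index (k, b))) * cj (K n i2 k))).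
  by rewrite mulr_suml.
rewrite [RHS]exchange_big /=.
under [RHS]eq_bigr => k _ do rewrite exchange_big.
by rewrite [RHS]exchange_big.
Qed.
End CP.

Lemma sylvester (F : fieldType) N k (B : 'M[F]_(N, k)) (Cm : 'M[F]_(k, N)) :
  char_poly (B *m Cm) * 'X^k = 'X^N * char_poly (Cm *m B).
Proof.
rewrite /char_poly /char_poly_mx !map_mxM.
set x : {poly F} := 'X.
set Bp := map_mx polyC B; set Cp := map_mx polyC Cm.
pose M := block_mx (1%:M : 'M_N) Bp Cp (x%:M : 'M_k).
have e1 : M *m block_mx (x%:M : 'M_N) 0 (- Cp) (1%:M : 'M_k)
    = block_mx (x%:M - Bp *m Cp) Bp 0 (x%:M).
  rewrite mulmx_block mul1mx mulmxN mulmx0 mulmx1 add0r.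
  by rewrite mul_mx_scalar mul_scalar_mx scalerN addrN mulmx0 add0r mulmx1.
have e2 : block_mx (1%:M : 'M_N) 0 (- Cp) (1%:M : 'M_k) *m M
    = block_mx 1%:M Bp 0 (x%:M - Cp *m Bp).
  rewrite mulmx_block !mul1mx !mul0mx !addr0 mulmx1 mulNmx addNr.
  by rewrite addrC.
have d1 := congr1 determinant e1.
have d2 := congr1 determinant e2.
rewrite det_mulmx det_lblock det_ublock !det_scalar expr1n mulr1 in d1.
rewrite det_mulmx det_lblock det_ublock !det_scalar !expr1n !mul1r in d2.
by rewrite -d1 d2 mulrC.
Qed.

Section Jam.
Variable R : rcfType.
Local Notation C := R[i].
Local Notation cj := (@Num.conj C).
Variables (d : nat) (T : 'M[R]_d) (sigma : 'I_d -> 'S_d).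
Hypothesis Tge0 : forall i j, 0 <= T i j.
Local Notation K := (kraus T sigma).
Local Notation Phi := (kraus_channel T sigma).

Definition Vm : 'M[C]_(d * d, d) :=
  \matrix_(p, n) K n (mxtens_unindex p).1 (mxtens_unindex p).2.

Lemma J_eq : jamiolkowski Phi = Vm *m ((d%:R^-1) *: adjmx Vm).
Proof.
rewrite -scalemxAr /jamiolkowski; congr (_ *: _).
apply/matrixP => p q.
case: p / (mxtens_indexP p) => i a; case: q / (mxtens_indexP q) => i2 b.
rewrite summxE; under eq_bigr => j _ do rewrite summxE.
under eq_bigr => j _ do under eq_bigr => k _ do rewrite tensmxE [delta_mx _ _ _ _]mxE.
rewrite (sum_delta2 a b (fun j k => Phi (delta_mx j k) i i2)) chan_delta mxE.
by apply: eq_bigr => n _; rewrite adjmxE !mxE !mxtens_indexK.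
Qed.

Definition lam (n : 'I_d) : R := \sum_i T i (sigma i n).

Lemma VV : adjmx Vm *m Vm = diag_mx (\row_n (lam n)%:C).
Proof.
apply/matrixP => n m; rewrite !mxE sum_tens.
under eq_bigr => i _ do under eq_bigr => a _ do
  rewrite adjmxE !mxE !mxtens_indexK /= (kraus_entry T sigma m i a).
under eq_bigr => i _ do rewrite (sum_ifr (sigma i m) ((Num.sqrt (T i (sigma i m)))%:C)
   (fun a => cj (K n i a))) kraus_entry (inj_eq perm_inj).
rewrite [n == m]eq_sym; case: (m =P n) => [->|hnm]; last first.
  by rewrite mulr0n big1 // => i _; rewrite rmorph0 mul0r.
rewrite mulr1n /lam rmorph_sum; apply: eq_bigr => i _.
by rewrite mulrC sqrtC_mul.
Qed.

End Jam.

Section Final.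
Variable R : rcfType.
Local Notation C := R[i].
Variables (d : nat) (T : 'M[R]_d) (sigma : 'I_d -> 'S_d).
Hypothesis Tge0 : forall i j, 0 <= T i j.
Hypothesis hsort : forall i (m n : 'I_d), (m <= n)%N -> T i (sigma i n) <= T i (sigma i m).

Lemma sort_row_eq i :
  sort >=%R [seq T i j | j <- enum 'I_d] = [seq T i (sigma i n) | n <- enum 'I_d].
Proof.
have tr : transitive (>=%R : rel R) by move=> a b c h1 h2; exact: le_trans h2 h1.
have hs : sorted >=%R [seq T i (sigma i n) | n <- enum 'I_d].
  rewrite sorted_map.
  have : sorted leq [seq val n | n <- enum 'I_d] by rewrite val_enum_ord iota_sorted.
  rewrite sorted_map; apply: sub_sorted => m n /= h; exact: hsort.
rewrite -[RHS](sorted_sort tr hs); apply/perm_sortP => //.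
- by move=> a b; exact: le_total.
- by move=> a b /andP [h1 h2]; apply: le_anti; apply/andP; split.
rewrite (map_comp (T i) (sigma i)); apply: perm_map.
apply: uniq_perm; rewrite ?enum_uniq ?(map_inj_uniq perm_inj) ?enum_uniq //.
move=> x; rewrite mem_enum; symmetry; apply/mapP; exists ((sigma i)^-1 x)%g.
  by rewrite mem_enum.
by rewrite permKV.
Qed.

Lemma sorted_row_eq i n (hn : (n < d)%N) :
  sorted_row T i n = T i (sigma i (Ordinal hn)).
Proof.
rewrite /sorted_row sort_row_eq (nth_map (Ordinal hn)) ?size_enum_ord //.
congr (T i (sigma i _)); apply: val_inj; by rewrite /= nth_enum_ord.
Qed.

End Final.

Section Final2.
Variable R : rcfType.
Local Notation C := R[i].
Variables (d : nat) (T : 'M[R]_d) (sigma : 'I_d -> 'S_d).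
Hypothesis dgt0 : (0 < d)%N.
Hypothesis Tge0 : forall i j, 0 <= T i j.
Hypothesis hsort : forall i (m n : 'I_d), (m <= n)%N -> T i (sigma i n) <= T i (sigma i m).

Lemma pred_mono (k l : 'I_(d * d)) : (k <= l)%N ->
  predicted_spectrum T l <= predicted_spectrum T k.
Proof.
move=> hkl; rewrite /predicted_spectrum.
have dinv : 0 <= (d%:R : R)^-1 by rewrite invr_ge0 ler0n.
case: (ltnP l d) => hl.
  have hk : (k < d)%N by exact: leq_ltn_trans hkl hl.
  rewrite hk; apply: ler_wpM2l => //; apply: ler_sum => i _.
  rewrite (sorted_row_eq hsort i hk) (sorted_row_eq hsort i hl).
  exact: hsort.
case: ifP => // hk; apply: mulr_ge0 => //; apply: sumr_ge0 => i _.
by rewrite (sorted_row_eq hsort i hk).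
Qed.

Lemma prod_pred :
  (\prod_(k < d * d) ('X - ((predicted_spectrum T k)%:C)%:P)) * 'X^d
  = 'X^(d * d) * \prod_(n < d) ('X - (((d%:R : R)^-1 * lam T sigma n)%:C)%:P).
Proof.
pose G := fun k : nat => ('X : {poly C}) -
   ((if (k < d)%N then (d%:R : R)^-1 * \sum_(i < d) sorted_row T i k else 0)%:C)%:P.
have -> : \prod_(k < d * d) ('X - ((predicted_spectrum T k)%:C)%:P) = \prod_(k < d * d) G k.
  by apply: eq_bigr.
have hdd : (d <= d * d)%N by rewrite leq_pmull.
rewrite -(big_mkord (fun _ => true) G) (big_cat_nat (leq0n d) hdd) /=.
have -> : \prod_(d <= i < d * d) G i = 'X^(d * d - d).
  rewrite -prodr_const_nat big_nat_cond [RHS]big_nat_cond; apply: eq_bigr => k /andP [/andP [hk _] _].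
  by rewrite /G ltnNge hk /= (_ : (0 : R)%:C = 0) // polyC0 subr0.
rewrite -mulrA -exprD subnK // mulrC big_mkord; congr (_ * _).
apply: eq_bigr => n _; rewrite /G ltn_ord; congr ('X - (_ %:C)%:P).
congr (_ * _); rewrite /lam; apply: eq_bigr => i _.
rewrite (sorted_row_eq hsort i (ltn_ord n)); congr (T i (sigma i _)).
by apply: val_inj.
Qed.

End Final2.

Unset Implicit Arguments.

Theorem mainTheorem4 (R : rcfType) (d : nat) (T : 'M[R]_d) (sigma : 'I_d -> 'S_d) :
  (0 < d)%N ->
  column_stochastic T ->
  (forall i (m n : 'I_d), (m <= n)%N -> T i (sigma i n) <= T i (sigma i m)) ->
  [/\ quantum_channel (kraus_channel T sigma),
      classical_action (kraus_channel T sigma) = map_mx (fun x => x%:C) T,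
      char_poly (jamiolkowski (kraus_channel T sigma))
        = \prod_(k < d * d) ('X - ((predicted_spectrum T k)%:C)%:P),
      (forall k l : 'I_(d * d), (k <= l)%N ->
         predicted_spectrum T l <= predicted_spectrum T k) &
      (\rank (jamiolkowski (kraus_channel T sigma)) <= d)%N].
Proof.
move=> dgt0 [Tge0 Tsum] hsort.
split.
- split.
  + by move=> c X Y; apply: linear_ok.
  + move=> m X hX; rewrite ext_id_eq; apply: psd_sum => n; exact: psd_congr.
  + by move=> X; apply: trace_ok.
- exact: classical_ok.
- have hX : ('X^d : {poly R[i]}) != 0 by rewrite expf_neq0 // polyX_eq0.
  apply: (mulIf hX); rewrite (prod_pred (sigma:=sigma) dgt0 hsort) J_eq sylvester; congr (_ * _).
  rewrite -scalemxAl VV //.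
  have -> : ((d%:R : R[i])^-1 *: diag_mx (\row_n (lam T sigma n)%:C))
      = diag_mx (\row_n (((d%:R : R)^-1 * lam T sigma n)%:C)).
    apply/matrixP => a b; rewrite !mxE rmorphM /= fmorphV rmorph_nat.
    by rewrite mulrnAr.
  rewrite char_poly_trig ?diag_mx_is_trig //; apply: eq_bigr => n _.
  by rewrite !mxE eqxx.
- by move=> k l; apply: (pred_mono Tge0 hsort).
- rewrite J_eq; exact: leq_trans (mxrankM_maxl _ _) (rank_leq_col _).
Qed.
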